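(* Let $k\ge1$, let $\mathcal A$ be a unital algebra with unit $\mathbf 1$, and let $(\mathbf u_n)_{n\in\mathbb Z}$ be invertible elements of $\mathcal A$ satisfying, for all $n\in\mathbb Z$, $$\mathbf u_{2n+2k+1}\mathbf u_{2n}=\mathbf u_{2n+1}\mathbf u_{2n+2k}+\mathbf 1,\qquad \mathbf u_{2n+1}\mathbf u_{2n+2k+2}=\mathbf u_{2n+2k+1}\mathbf u_{2n+2}+\mathbf 1 .$$ Then for all $n,i\in\mathbb Z$, $\mathbf u_n$ is a positive Laurent polynomial of the initial data $\mathbf x_i=(\mathbf u_i,\mathbf u_{i+1},\dots,\mathbf u_{i+2k})$: there is a finite sum, with non-negative integer coefficients, of words in $X_0^{\pm1},\dots,X_{2k}^{\pm1}$ (depending only on $n,i,k$) which evaluates to $\mathbf u_n$ at $X_j=\mathbf u_{i+j}$. *)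

(* Defs.v *)
From HB Require Import structures.
From mathcomp Require Import all_boot all_order all_algebra.
Set Implicit Arguments. Unset Strict Implicit. Unset Printing Implicit Defensive.
Import Order.TTheory GRing.Theory Num.Theory.
Local Open Scope ring_scope.

(* A letter of a Laurent word in the noncommuting variables X_0, ..., X_(m-1):
   (j, true) stands for X_j and (j, false) for X_j^{-1}. *)
Definition letter (m : nat) := ('I_m * bool)%type.
Definition word (m : nat) := seq (letter m).

(* A positive Laurent polynomial: a finite formal sum  sum_l c_l * w_l
   with non-negative integer coefficients c_l and words w_l. *)
Definition pos_laurent (m : nat) := seq (nat * word m).

Definition eval_word (R : unitRingType) (m : nat) (x : 'I_m -> R) (w : word m) : R :=
  \prod_(l <- w) (if l.2 then x l.1 else (x l.1)^-1).

Definition eval_pos_laurent (R : unitRingType) (m : nat) (x : 'I_m -> R)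
    (P : pos_laurent m) : R :=
  \sum_(t <- P) (eval_word x t.2) *+ t.1.

(* Main.v *)
Require Import Defs.
From Stdlib Require Import ZArith Lia.
From HB Require Import structures.
From mathcomp Require Import all_boot all_order all_algebra.
Import GRing.Theory.
Set Implicit Arguments. Unset Strict Implicit. Unset Printing Implicit Defensive.
Local Open Scope ring_scope.

Lemma eval_cat (R : unitRingType) m (x : 'I_m -> R) (P Q : pos_laurent m) :
  eval_pos_laurent x (P ++ Q) = eval_pos_laurent x P + eval_pos_laurent x Q.
Proof. by rewrite /eval_pos_laurent big_cat. Qed.

Lemma eval_word_cat (R : unitRingType) m (x : 'I_m -> R) (w1 w2 : word m) :
  eval_word x (w1 ++ w2) = eval_word x w1 * eval_word x w2.
Proof. by rewrite /eval_word big_cat. Qed.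

Definition pmul m (P Q : pos_laurent m) : pos_laurent m :=
  [seq (muln t.1 s.1, t.2 ++ s.2) | t <- P, s <- Q].

Lemma eval_pmul (R : unitRingType) m (x : 'I_m -> R) (P Q : pos_laurent m) :
  eval_pos_laurent x (pmul P Q) = eval_pos_laurent x P * eval_pos_laurent x Q.
Proof.
rewrite /eval_pos_laurent /pmul big_allpairs_dep mulr_suml.
apply: eq_bigr => t _; rewrite mulr_sumr; apply: eq_bigr => s _ /=.
by rewrite eval_word_cat mulrnAl mulrnAr -mulrnA mulnC.
Qed.

Definition pvar m (j : 'I_m) (b : bool) : pos_laurent m := [:: (1%nat, [:: (j, b)])].

Lemma eval_pvar (R : unitRingType) m (x : 'I_m -> R) j b :
  eval_pos_laurent x (pvar j b) = if b then x j else (x j)^-1.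
Proof. by rewrite /eval_pos_laurent /pvar big_seq1 /eval_word big_seq1 /=. Qed.

Lemma eval_nil (R : unitRingType) m (x : 'I_m -> R) : eval_pos_laurent x [::] = 0.
Proof. by rewrite /eval_pos_laurent big_nil. Qed.

Definition CoreHyp (K e : nat) (A : unitRingType) (x : nat -> A) : Prop :=
  [/\ (forall j, x j \is a GRing.unit),
      (forall j, odd (e + j) -> x j * x (j + K).+1 = x (j + K) * x j.+1 + 1) &
      (forall j, ~~ odd (e + j) -> x (j + K).+1 * x j = x j.+1 * x (j + K) + 1)].

Definition win (K : nat) (A : unitRingType) (x : nat -> A) : 'I_K.+1 -> A :=
  fun j => x (nat_of_ord j).
Arguments win K [A] x j.

Definition Pos (K e : nat) (f : forall A : unitRingType, (nat -> A) -> A) : Prop :=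
  exists P : pos_laurent K.+1, forall (A : unitRingType) (x : nat -> A),
    CoreHyp K e x -> f A x = eval_pos_laurent (win K x) P.

Lemma Pos_ext K e (f g : forall A : unitRingType, (nat -> A) -> A) :
  (forall (A : unitRingType) (x : nat -> A), CoreHyp K e x -> f A x = g A x) ->
  Pos K e f -> Pos K e g.
Proof. move=> E [P HP]; exists P => A x H; rewrite -E //; exact: HP. Qed.

Lemma Pos_add K e f g : Pos K e f -> Pos K e g -> Pos K e (fun A x => f A x + g A x).
Proof. move=> [P HP] [Q HQ]; exists (P ++ Q) => A x H. by rewrite eval_cat HP ?HQ. Qed.

Lemma Pos_mul K e f g : Pos K e f -> Pos K e g -> Pos K e (fun A x => f A x * g A x).
Proof. move=> [P HP] [Q HQ]; exists (pmul P Q) => A x H. by rewrite eval_pmul HP ?HQ. Qed.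

Lemma Pos_zero K e : Pos K e (fun A x => 0).
Proof. by exists [::] => A x H; rewrite eval_nil. Qed.

Lemma Pos_var K e j : (j <= K)%N -> Pos K e (fun A x => x j).
Proof. move=> hj; exists (pvar (Ordinal (hj : j < K.+1)%N) true) => A x H. by rewrite eval_pvar. Qed.

Lemma Pos_inv K e j : (j <= K)%N -> Pos K e (fun A x => (x j)^-1).
Proof. move=> hj; exists (pvar (Ordinal (hj : j < K.+1)%N) false) => A x H. by rewrite eval_pvar. Qed.

Definition rho (K e : nat) (A : unitRingType) (x : nat -> A) (j : nat) : A :=
  if odd (e + j) then (x j)^-1 * x (j + K)%N else x (j + K)%N * (x j)^-1.
Arguments rho K e [A] x j.
Definition del (K e : nat) (A : unitRingType) (x : nat -> A) (j : nat) : A :=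
  if odd (e + j) then (x j)^-1 * (x j.+1)^-1 else (x j.+1)^-1 * (x j)^-1.
Arguments del K e [A] x j.
Definition Phi (K e : nat) (A : unitRingType) (x : nat -> A) (a n : nat) : A :=
  x (n + K)%N - (if odd (e + n) then x n * rho K e x a else rho K e x a * x n).
Arguments Phi K e [A] x a n.

Lemma rhoS K e (A : unitRingType) (x : nat -> A) j :
  CoreHyp K e x -> rho K e x j.+1 = rho K e x j + del K e x j.
Proof.
case=> U Ho He; rewrite /rho /del addnS /= addSn.
have := Ho j; have := He j; case: (odd (e + j)) => /= He' Ho'.
- rewrite -[x (j + K).+1](mulKr (U j)) (Ho' isT) mulrDr mulr1 mulrDl.
  by rewrite -!mulrA mulrV ?mulr1.
- rewrite -[x (j + K).+1](mulrK (U j)) (He' isT) mulrDl mul1r mulrDr.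
  by rewrite !mulrA mulVr ?mul1r.
Qed.

Lemma eq_sub (A : unitRingType) (a b c d : A) : a + d = b + c -> a - b = c - d.
Proof.
move=> h; apply/eqP; rewrite subr_eq -(addrK d a) h.
by rewrite [X in _ == X]addrC addrA.
Qed.

Section Alg.
End Alg.

Lemma odd_shift K e j : ~~ odd K -> odd (e + (j + K)) = odd (e + j).
Proof. by move=> hK; rewrite addnA oddD (negbTE hK) addbF. Qed.

Lemma rho_unit K e (A : unitRingType) (x : nat -> A) j :
  CoreHyp K e x -> rho K e x j \is a GRing.unit.
Proof. by case=> U _ _; rewrite /rho; case: (odd (e + j)); rewrite unitrMl ?unitrV ?U. Qed.

Lemma xshift K e (A : unitRingType) (x : nat -> A) j :
  CoreHyp K e x ->
  x (j + K)%N = if odd (e + j) then x j * rho K e x j else rho K e x j * x j.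
Proof.
case=> U _ _; rewrite /rho; case: (odd (e + j)).
  by rewrite mulrA mulrV ?mul1r.
by rewrite -mulrA mulVr ?mulr1.
Qed.

Lemma del_shift K e (A : unitRingType) (x : nat -> A) j :
  ~~ odd K -> CoreHyp K e x ->
  del K e x (j + K)%N = (rho K e x j)^-1 - (rho K e x j.+1)^-1.
Proof.
move=> hK [U Ho He]; rewrite /del /rho (odd_shift _ _ hK) addnS /= addSn.
have := Ho j; have := He j; case: (odd (e + j)) => /= He' Ho'.
- rewrite !invrM ?unitrV ?U // !invrK.
  rewrite -[x j in RHS](mulrK (U (j + K).+1)) (Ho' isT) mulrDl mul1r mulrDr.
  by rewrite !mulrA mulVr ?mul1r ?U // addrAC subrr add0r.
- rewrite !invrM ?unitrV ?U // !invrK.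
  rewrite -[x j in RHS](mulKr (U (j + K).+1)) (He' isT) mulrDr mulr1 mulrDl.
  by rewrite -!mulrA mulrV ?mulr1 ?U // addrAC subrr add0r.
Qed.

Lemma rho_cons K e (A : unitRingType) (x : nat -> A) j :
  ~~ odd K -> CoreHyp K e x ->
  rho K e x (j + K)%N + (rho K e x j)^-1 = rho K e x K + (rho K e x 0)^-1.
Proof.
move=> hK H; elim: j => [|j IH]; first by rewrite add0n.
rewrite -IH addSn (rhoS _ H) (del_shift _ hK H).
by rewrite -addrA addrNK.
Qed.

Lemma PhiS K e (A : unitRingType) (x : nat -> A) a n :
  CoreHyp K e x ->
  Phi K e x a n = Phi K e x a.+1 n +
    (if odd (e + n) then x n * del K e x a else del K e x a * x n).
Proof.
move=> H; rewrite /Phi (rhoS _ H); case: (odd (e + n)).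
  by rewrite mulrDr opprD addrA subrK.
by rewrite mulrDl opprD addrA subrK.
Qed.

Lemma Phinn K e (A : unitRingType) (x : nat -> A) n :
  CoreHyp K e x -> Phi K e x n n = 0.
Proof. by move=> H; rewrite /Phi -(xshift _ H) subrr. Qed.

Lemma PhiK K e (A : unitRingType) (x : nat -> A) n :
  ~~ odd K -> CoreHyp K e x ->
  Phi K e x K (n + K)%N =
  if odd (e + n) then Phi K e x 0 n * (rho K e x 0)^-1
  else (rho K e x 0)^-1 * Phi K e x 0 n.
Proof.
move=> hK H; have U0 := rho_unit 0 H; have Un := rho_unit n H.
have C := rho_cons n hK H.
have E : rho K e x (n + K)%N - rho K e x K = (rho K e x 0)^-1 - (rho K e x n)^-1.
  by apply: eq_sub; rewrite C addrC.
rewrite /Phi (odd_shift _ _ hK) (xshift (n + K) H) (odd_shift _ _ hK).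
have Xn := xshift n H.
case: (odd (e + n)) Xn => Xn.
- have -> : x n = x (n + K)%N * (rho K e x n)^-1 by rewrite Xn mulrK.
  by rewrite -mulrBr E mulrBl mulrBr mulrK.
- have -> : x n = (rho K e x n)^-1 * x (n + K)%N by rewrite Xn mulKr.
  by rewrite -mulrBl E mulrBr mulrBl mulKr.
Qed.

Lemma Pos_rho0 K e : Pos K e (fun A x => rho K e x 0).
Proof.
case: (boolP (odd (e + 0))) => E.
  apply: (@Pos_ext _ _ (fun A x => (x 0%N)^-1 * x K)); first by move=> A x H; rewrite /rho E.
  by apply: Pos_mul; [apply: Pos_inv | apply: Pos_var].
apply: (@Pos_ext _ _ (fun A x => x K * (x 0%N)^-1)); first by move=> A x H; rewrite /rho (negbTE E).
by apply: Pos_mul; [apply: Pos_var | apply: Pos_inv].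
Qed.

Lemma Pos_rho0inv K e : Pos K e (fun A x => (rho K e x 0)^-1).
Proof.
case: (boolP (odd (e + 0))) => E.
  apply: (@Pos_ext _ _ (fun A x => (x K)^-1 * x 0%N)).
    by move=> A x [U _ _]; rewrite /rho E invrM ?unitrV ?U // invrK.
  by apply: Pos_mul; [apply: Pos_inv | apply: Pos_var].
apply: (@Pos_ext _ _ (fun A x => x 0%N * (x K)^-1)).
  by move=> A x [U _ _]; rewrite /rho (negbTE E) invrM ?unitrV ?U // invrK.
by apply: Pos_mul; [apply: Pos_var | apply: Pos_inv].
Qed.

Lemma Pos_del K e a : (a < K)%N -> Pos K e (fun A x => del K e x a).
Proof.
move=> ha; have ha' : (a <= K)%N by apply: ltnW.
case: (boolP (odd (e + a))) => E.
  apply: (@Pos_ext _ _ (fun A x => (x a)^-1 * (x a.+1)^-1)); first by move=> A x H; rewrite /del E.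
  by apply: Pos_mul; apply: Pos_inv.
apply: (@Pos_ext _ _ (fun A x => (x a.+1)^-1 * (x a)^-1)); first by move=> A x H; rewrite /del (negbTE E).
by apply: Pos_mul; apply: Pos_inv.
Qed.

Lemma Pos_chain K e n c :
  (c <= K)%N -> Pos K e (fun A x => x n) -> Pos K e (fun A x => Phi K e x c n) ->
  Pos K e (fun A x => Phi K e x 0 n).
Proof.
move=> hc Pn Pc.
suff: forall d, (d <= c)%N -> Pos K e (fun A x => Phi K e x (c - d)%N n).
  by move/(_ c (leqnn c)); rewrite subnn.
elim=> [|d IH] hd; first by rewrite subn0.
have hdc : (d < c)%N by [].
have Ea : (c - d.+1)%N.+1 = (c - d)%N by rewrite subnSK.
have hK : (c - d.+1 < K)%N.
  apply: (leq_trans _ hc); rewrite ltn_subrL; apply/andP; split => //.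
  exact: (leq_ltn_trans (leq0n d) hdc).
have Pt : Pos K e (fun A x => if odd (e + n) then x n * del K e x (c - d.+1)%N
                              else del K e x (c - d.+1)%N * x n).
  case: (odd (e + n)); apply: Pos_mul => //; exact: Pos_del.
apply: (@Pos_ext _ _ (fun A x => Phi K e x (c - d)%N n +
   (if odd (e + n) then x n * del K e x (c - d.+1)%N else del K e x (c - d.+1)%N * x n))).
  by move=> A x H; rewrite [RHS](PhiS _ _ H) Ea.
apply: Pos_add => //; apply: IH; exact: ltnW.
Qed.

Lemma core K e : ~~ odd K -> (0 < K)%N -> forall n,
  Pos K e (fun A x => x n) /\ Pos K e (fun A x => Phi K e x 0 n).
Proof.
move=> hK K0; elim/ltn_ind => n IH.
have Px : Pos K e (fun A x => x n).
  case: (leqP n K) => hn; first exact: Pos_var.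
  have [m Em] : exists m, n = (m + K)%N by exists (n - K)%N; rewrite subnK // ltnW.
  have hm : (m < n)%N by rewrite Em -{1}[m]addn0 ltn_add2l.
  have [P1 P2] := IH m hm.
  rewrite Em.
  apply: (@Pos_ext _ _ (fun A x => Phi K e x 0 m +
    (if odd (e + m) then x m * rho K e x 0 else rho K e x 0 * x m))).
    by move=> A x H; rewrite /Phi subrK.
  apply: Pos_add => //; case: (odd (e + m)); apply: Pos_mul => //; exact: Pos_rho0.
split => //.
case: (leqP n K) => hn.
  apply: (@Pos_chain _ _ _ n) => //.
  apply: (Pos_ext _ (Pos_zero K e)) => A x H; by rewrite Phinn.
have [m Em] : exists m, n = (m + K)%N by exists (n - K)%N; rewrite subnK // ltnW.
have hm : (m < n)%N by rewrite Em -{1}[m]addn0 ltn_add2l.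
have [P1 P2] := IH m hm.
apply: (@Pos_chain _ _ _ K) => //.
rewrite Em.
case: (boolP (odd (e + m))) => E.
  apply: (@Pos_ext _ _ (fun A x => Phi K e x 0 m * (rho K e x 0)^-1)).
    by move=> A x H; rewrite (PhiK _ hK H) E.
  apply: Pos_mul => //; exact: Pos_rho0inv.
apply: (@Pos_ext _ _ (fun A x => (rho K e x 0)^-1 * Phi K e x 0 m)).
  by move=> A x H; rewrite (PhiK _ hK H) (negbTE E).
apply: Pos_mul => //; exact: Pos_rho0inv.
Qed.

Delimit Scope Z_scope with ZZ.
Definition zi (x : int) : Z := match x with Posz n => Z.of_nat n | Negz n => (- Z.of_nat n - 1)%ZZ end.

Lemma zi_inj : injective zi.
Proof. case=> [a|a] [b|b] /= h; f_equal; lia. Qed.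

Lemma ziD a b : zi (a + b) = (zi a + zi b)%ZZ.
Proof.
case: a => [a|a]; case: b => [b|b] /=; rewrite /GRing.add /=.
all: try (case: ltnP => h; rewrite /= ?subnE; move/leP: h => h); rewrite ?addnE ?subnE /=; try lia.
Qed.
Lemma ziN a : zi (- a) = (- zi a)%ZZ.
Proof. case: a => [[|a]|a] /=; rewrite /GRing.opp /=; lia. Qed.
Lemma ziB a b : zi (a - b) = (zi a - zi b)%ZZ.
Proof. by rewrite ziD ziN; lia. Qed.
Lemma ziM a b : zi (a * b) = (zi a * zi b)%ZZ.
Proof.
case: a => [a|a]; case: b => [b|b] /=; rewrite /GRing.mul /= ?mulnE; try lia.
all: rewrite ziN /=; lia.
Qed.
Lemma ziPosz n : zi (Posz n) = Z.of_nat n. Proof. by []. Qed.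
Lemma zinat n : zi (n%:R) = Z.of_nat n.
Proof. by rewrite natz. Qed.
Lemma ziNegz n : zi (Negz n) = (- Z.of_nat n - 1)%ZZ. Proof. by []. Qed.
Lemma zi1 : zi 1 = 1%ZZ. Proof. by []. Qed.
Lemma zi0 : zi 0 = 0%ZZ. Proof. by []. Qed.
Ltac zpush := rewrite ?(ziD, ziB, ziN, ziM, zinat, zi1, zi0, ziPosz, ziNegz).
Ltac zint := apply: zi_inj; zpush; rewrite -?plusE -?multE -?minusE; lia.

Lemma int_parity (i : int) : exists (h : int) (e : nat), i = 2 * h + e%:Z.
Proof.
exists (i %/ 2)%Z.
have := modz_ge0 i (isT : (2 : int) != 0).
have E := divz_eq i 2.
case: (i %% 2)%Z E => [e|e] E // _.
exists e; rewrite {1}E; zint.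
Qed.

Lemma conv (k : nat) (A : unitRingType) (u : int -> A) (i h : int) (e : nat) :
  i = 2 * h + e%:Z ->
  (forall m : int, u m \is a GRing.unit) ->
  (forall m : int,
      u (2 * m + 2 * k%:Z + 1) * u (2 * m)
        = u (2 * m + 1) * u (2 * m + 2 * k%:Z) + 1) ->
  (forall m : int,
      u (2 * m + 1) * u (2 * m + 2 * k%:Z + 2)
        = u (2 * m + 2 * k%:Z + 1) * u (2 * m + 2) + 1) ->
  CoreHyp (2 * k) e (fun j => u (i + j%:Z)).
Proof.
move=> Ei U h1 h2.
have Zi : zi i = (2 * zi h + Z.of_nat e)%ZZ by rewrite Ei; zpush; lia.
split => // j.
- move=> oj; set q := ((e + j)./2)%N.
  have Ec : (e + j)%N = (q.*2 + 1)%N by rewrite -{1}(odd_double_half (e + j)) oj addnC.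
  rewrite -mul2n -?plusE -?multE in Ec.
  have E1 : i + j%:Z = 2 * (h + q%:Z) + 1 by zint.
  have E2 : i + ((j + 2 * k).+1)%N%:Z = 2 * (h + q%:Z) + 2 * k%:Z + 2 by zint.
  have E3 : i + (j + 2 * k)%N%:Z = 2 * (h + q%:Z) + 2 * k%:Z + 1 by zint.
  have E4 : i + (j.+1)%:Z = 2 * (h + q%:Z) + 2 by zint.
  by rewrite E1 E2 E3 E4.
- move=> oj; set q := ((e + j)./2)%N.
  have Ec : (e + j)%N = (q.*2)%N by rewrite -{1}(odd_double_half (e + j)) (negbTE oj).
  rewrite -mul2n -?plusE -?multE in Ec.
  have E1 : i + j%:Z = 2 * (h + q%:Z) by zint.
  have E2 : i + ((j + 2 * k).+1)%N%:Z = 2 * (h + q%:Z) + 2 * k%:Z + 1 by zint.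
  have E3 : i + (j + 2 * k)%N%:Z = 2 * (h + q%:Z) + 2 * k%:Z by zint.
  have E4 : i + (j.+1)%:Z = 2 * (h + q%:Z) + 1 by zint.
  by rewrite E1 E2 E3 E4.
Qed.

Definition remap m (f : 'I_m -> 'I_m) (P : pos_laurent m) : pos_laurent m :=
  [seq (t.1, [seq (f l.1, l.2) | l <- t.2]) | t <- P].

Lemma eval_remap (R : unitRingType) m (y : 'I_m -> R) f (P : pos_laurent m) :
  eval_pos_laurent y (remap f P) = eval_pos_laurent (fun j => y (f j)) P.
Proof.
rewrite /eval_pos_laurent /remap big_map; apply: eq_bigr => t _ /=.
by rewrite /eval_word big_map.
Qed.

Lemma rev_hyps (k : nat) (A : unitRingType) (u : int -> A) :
  (forall m : int,
      u (2 * m + 2 * k%:Z + 1) * u (2 * m)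
        = u (2 * m + 1) * u (2 * m + 2 * k%:Z) + 1) ->
  (forall m : int,
      u (2 * m + 1) * u (2 * m + 2 * k%:Z + 2)
        = u (2 * m + 2 * k%:Z + 1) * u (2 * m + 2) + 1) ->
  (forall m : int,
      u (- (2 * m + 2 * k%:Z + 1)) * u (- (2 * m))
        = u (- (2 * m + 1)) * u (- (2 * m + 2 * k%:Z)) + 1) /\
  (forall m : int,
      u (- (2 * m + 1)) * u (- (2 * m + 2 * k%:Z + 2))
        = u (- (2 * m + 2 * k%:Z + 1)) * u (- (2 * m + 2)) + 1).
Proof.
move=> h1 h2; split => m.
- have := h2 (- m - k%:Z - 1).
  have E1 : 2 * (- m - k%:Z - 1) + 1 = - (2 * m + 2 * k%:Z + 1) by zint.
  have E2 : 2 * (- m - k%:Z - 1) + 2 * k%:Z + 2 = - (2 * m) by zint.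
  have E3 : 2 * (- m - k%:Z - 1) + 2 * k%:Z + 1 = - (2 * m + 1) by zint.
  have E4 : 2 * (- m - k%:Z - 1) + 2 = - (2 * m + 2 * k%:Z) by zint.
  by rewrite E2 E3 E4 E1.
- have := h1 (- m - k%:Z - 1).
  have E1 : 2 * (- m - k%:Z - 1) + 2 * k%:Z + 1 = - (2 * m + 1) by zint.
  have E2 : 2 * (- m - k%:Z - 1) = - (2 * m + 2 * k%:Z + 2) by zint.
  have E3 : 2 * (- m - k%:Z - 1) + 1 = - (2 * m + 2 * k%:Z + 1) by zint.
  have E4 : 2 * (- m - k%:Z - 1) + 2 * k%:Z = - (2 * m + 2) by zint.
  by rewrite E1 E3 E4 E2.
Qed.

Lemma eval_ext (R : unitRingType) m (y y' : 'I_m -> R) (P : pos_laurent m) :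
  (forall j, y j = y' j) -> eval_pos_laurent y P = eval_pos_laurent y' P.
Proof.
move=> E; rewrite /eval_pos_laurent; apply: eq_bigr => t _.
by rewrite /eval_word; congr (_ *+ _); apply: eq_bigr => l _; rewrite E.
Qed.

Unset Implicit Arguments.

Theorem mainTheorem14 (k : nat) (hk : (1 <= k)%N) (n i : int) :
  exists P : pos_laurent (2 * k).+1,
    forall (A : unitRingType) (u : int -> A),
      (forall m : int, u m \is a GRing.unit) ->
      (forall m : int,
          u (2 * m + 2 * k%:Z + 1) * u (2 * m)
            = u (2 * m + 1) * u (2 * m + 2 * k%:Z) + 1) ->
      (forall m : int,
          u (2 * m + 1) * u (2 * m + 2 * k%:Z + 2)
            = u (2 * m + 2 * k%:Z + 1) * u (2 * m + 2) + 1) ->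
      u n = eval_pos_laurent (fun j : 'I_(2 * k).+1 => u (i + (j : nat)%:Z)) P.
Proof.
have hK : ~~ odd (2 * k)%N by rewrite oddM.
have K0 : (0 < 2 * k)%N by rewrite muln_gt0.
case E: (n - i) => [d|d].
- have En : n = i + d%:Z.
    have := congr1 zi E; zpush => ?; zint.
  have [h [e Ei]] := int_parity i.
  have [P HP] := (core e hK K0 d).1.
  exists P => A u U h1 h2.
  have H := conv Ei U h1 h2.
  by rewrite En (HP _ _ H).
- have [h [e Ei]] := int_parity (- (i + 2 * k%:Z)).
  have [P HP] := (core e hK K0 (2 * k + d.+1)%N).1.
  exists (remap (@rev_ord _) P) => A u U h1 h2.
  have [h1' h2'] := rev_hyps h1 h2.
  have U' : forall m : int, (fun m => u (- m)) m \is a GRing.unit by move=> m; exact: U.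
  have H := conv (u := fun m => u (- m)) Ei U' h1' h2'.
  have := HP _ _ H; rewrite /= => HP'.
  rewrite eval_remap.
  have -> : n = - (- (i + 2 * k%:Z) + (2 * k + d.+1)%N%:Z).
    have := congr1 zi E; zpush => ?; zint.
  transitivity (eval_pos_laurent (win (2 * k) (fun j : nat => u (- (- (i + 2 * k%:Z) + j%:Z)))) P); first exact: HP'.
  apply: eval_ext => j.
  have Ej : nat_of_ord (rev_ord j) = ((2 * k)%N - j)%N by rewrite /= subSS.
  have hj : (j < (2 * k)%N.+1)%N := ltn_ord j.
  move/ltP: hj => hj.
  rewrite /win Ej; congr u.
  move: (nat_of_ord j) hj => jj hj.
  rewrite -?multE in hj.
  zint.
Qed.
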